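(* Let $\{G^k\}$ be a $B$-strongly connected sequence of digraphs on $\{1,\dots,I\}$, and let each $\mathbf{A}^k=(a_{ij}^k)$ be compliant with $G^k$ (constant $\kappa>0$) and column stochastic. Consider the condensed push-sum protocol with $\phi_{(i)}^0=1$, arbitrary $\mathbf{x}_{(i)}^0\in\mathbb{R}^m$, and $\phi_{(i)}^{k+1}=\sum_ja_{ij}^k\phi_{(j)}^k$, $\mathbf{x}_{(i)}^{k+1}=\frac{1}{\phi_{(i)}^{k+1}}\sum_ja_{ij}^k\phi_{(j)}^k\mathbf{x}_{(j)}^k$. Then for all $k\ge0$: (a) $\sum_{i}\phi_{(i)}^{k+1}\mathbf{x}_{(i)}^{k+1}=\sum_i\phi_{(i)}^k\mathbf{x}_{(i)}^k=\sum_i\phi_{(i)}^0\mathbf{x}_{(i)}^0$; (b) for all $i$, $$\Big\|\mathbf{x}_{(i)}^k-\frac1I\sum_{j=1}^I\phi_{(j)}^k\mathbf{x}_{(j)}^k\Big\|\le c_d\,\rho_d^k\,\|\mathbf{x}^0\|,$$ with $\tilde\kappa_d\triangleq\kappa^{2(I-1)B+1}/I$, $\rho_d\triangleq(1-\tilde\kappa_d^{(I-1)B})^{1/((I-1)B)}$, $c_d\triangleq\frac{2I}{\rho_d}\cdot\frac{2(1+\tilde\kappa_d^{-(I-1)B})}{1-\tilde\kappa_d^{(I-1)B}}$, and $\mathbf{x}^0=(\mathbf{x}^0_{(i)})_{i=1}^I$.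
   Context: A digraph at time $k$ is $G^k=(V,E^k)$, $V=\{1,\dots,I\}$, with edge $(j,i)\in E^k$ meaning $j$ can send to $i$. The sequence is $B$-strongly connected if there is an integer $B>0$ such that for every $k$ the digraph with edge set $\bigcup_{t=k}^{k+B-1}E^t$ is strongly connected. $\mathbf{A}^k$ is compliant with $G^k$ (constant $\kappa>0$) if $a_{ij}^k=0$ whenever $j\ne i$ and $(j,i)\notin E^k$, $a_{ij}^k\ge\kappa$ whenever $(j,i)\in E^k$, and $a_{ii}^k\ge\kappa$; it is column stochastic if its entries are nonnegative and $\mathbf{1}^T\mathbf{A}^k=\mathbf{1}^T$. *)

(* Defs.v *)
From Stdlib Require Import Reals Relations.
Open Scope R_scope.

(* Nodes are 0, ..., I-1 (the paper's 1, ..., I). *)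

Fixpoint fsum (n : nat) (f : nat -> R) : R :=
  match n with
  | O => 0
  | S n' => fsum n' f + f n'
  end.

(* A time-varying digraph sequence: E k j i  means  (j,i) \in E^k,
   i.e. j can send to i at time k. *)
Definition digraph_seq := nat -> nat -> nat -> Prop.

Definition strongly_connected (I : nat) (Ed : nat -> nat -> Prop) : Prop :=
  forall i j, (i < I)%nat -> (j < I)%nat ->
    clos_refl_trans_1n nat (fun u v => (u < I)%nat /\ (v < I)%nat /\ Ed u v) i j.

Definition B_strongly_connected (I : nat) (E : digraph_seq) (B : nat) : Prop :=
  (0 < B)%nat /\
  forall k, strongly_connected I
    (fun u v => exists t, (k <= t)%nat /\ (t <= k + B - 1)%nat /\ E t u v).

(* A k i j = a_{ij}^k *)
Definition matrix_seq := nat -> nat -> nat -> R.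

Definition compliant (I : nat) (E : digraph_seq) (A : matrix_seq) (kappa : R) : Prop :=
  forall k i j, (i < I)%nat -> (j < I)%nat ->
    ((j <> i -> ~ E k j i -> A k i j = 0) /\
     (E k j i -> kappa <= A k i j) /\
     kappa <= A k i i).

Definition column_stochastic (I : nat) (A : matrix_seq) : Prop :=
  forall k,
    (forall i j, (i < I)%nat -> (j < I)%nat -> 0 <= A k i j) /\
    (forall j, (j < I)%nat -> fsum I (fun i => A k i j) = 1).

Fixpoint ps_phi (I : nat) (A : matrix_seq) (k i : nat) : R :=
  match k with
  | O => 1
  | S k' => fsum I (fun j => A k' i j * ps_phi I A k' j)
  end.

(* Estimates x^k_(i), a vector in R^m given as its coordinate function l |-> x_l. *)
Fixpoint ps_x (I : nat) (A : matrix_seq) (x0 : nat -> nat -> R) (k i : nat) : nat -> R :=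
  match k with
  | O => x0 i
  | S k' => fun l =>
      / ps_phi I A (S k') i *
      fsum I (fun j => A k' i j * ps_phi I A k' j * ps_x I A x0 k' j l)
  end.

Definition vnorm (m : nat) (v : nat -> R) : R :=
  sqrt (fsum m (fun l => v l ^ 2)).

Definition stacked_norm (I m : nat) (x : nat -> nat -> R) : R :=
  sqrt (fsum I (fun i => fsum m (fun l => x i l ^ 2))).

Definition kappa_tilde_d (I B : nat) (kappa : R) : R :=
  kappa ^ (2 * (I - 1) * B + 1) / INR I.

Definition rho_d (I B : nat) (kappa : R) : R :=
  Rpower (1 - kappa_tilde_d I B kappa ^ ((I - 1) * B)) (/ INR ((I - 1) * B)).

Definition c_d (I B : nat) (kappa : R) : R :=
  let t := kappa_tilde_d I B kappa ^ ((I - 1) * B) in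
  (2 * INR I / rho_d I B kappa) * (2 * (1 + / t) / (1 - t)).

(* Main.v *)
Require Import Defs.
From Stdlib Require Import Reals Relations Lra Lia Psatz Classical.
Open Scope R_scope.

Lemma fsum_ext n f g : (forall i, (i < n)%nat -> f i = g i) -> fsum n f = fsum n g.
Proof. induction n; simpl; intros H; auto. rewrite IHn by (intros; apply H; lia). rewrite H by lia. reflexivity. Qed.

Lemma fsum_plus n f g : fsum n (fun i => f i + g i) = fsum n f + fsum n g.
Proof. induction n; simpl; [lra|]. rewrite IHn. lra. Qed.

Lemma fsum_minus n f g : fsum n (fun i => f i - g i) = fsum n f - fsum n g.
Proof. induction n; simpl; [lra|]. rewrite IHn. lra. Qed.

Lemma fsum_scal n c f : fsum n (fun i => c * f i) = c * fsum n f.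
Proof. induction n; simpl; [lra|]. rewrite IHn. lra. Qed.

Lemma fsum_const n c : fsum n (fun _ => c) = INR n * c.
Proof. induction n; simpl fsum; [simpl; lra|]. rewrite IHn, S_INR. lra. Qed.

Lemma fsum_swap n p f : fsum n (fun i => fsum p (fun j => f i j)) = fsum p (fun j => fsum n (fun i => f i j)).
Proof.
  induction n; simpl.
  - rewrite (fsum_const p 0). lra.
  - rewrite IHn, <- fsum_plus. reflexivity.
Qed.

Lemma fsum_le n f g : (forall i, (i < n)%nat -> f i <= g i) -> fsum n f <= fsum n g.
Proof. induction n; simpl; intros H; [lra|]. assert (f n <= g n) by (apply H; lia).
  assert (fsum n f <= fsum n g) by (apply IHn; intros; apply H; lia). lra. Qed.

Lemma fsum_nonneg n f : (forall i, (i < n)%nat -> 0 <= f i) -> 0 <= fsum n f.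
Proof. intros H. rewrite <- (Rmult_0_r (INR n)), <- fsum_const. apply fsum_le. auto. Qed.

Lemma fsum_ge_term n f i : (forall j, (j < n)%nat -> 0 <= f j) -> (i < n)%nat -> f i <= fsum n f.
Proof.
  induction n; intros H Hi; [lia|]. simpl.
  destruct (Nat.eq_dec i n).
  - subst. assert (0 <= fsum n f) by (apply fsum_nonneg; intros; apply H; lia). lra.
  - assert (f i <= fsum n f) by (apply IHn; [intros; apply H; lia| lia]).
    assert (0 <= f n) by (apply H; lia). lra.
Qed.

Lemma fsum_abs n f : Rabs (fsum n f) <= fsum n (fun i => Rabs (f i)).
Proof. induction n; simpl. rewrite Rabs_R0; lra.
  eapply Rle_trans; [apply Rabs_triang|]. lra. Qed.

Lemma fsum_point0 n g r : (forall j, j <> r -> g j = 0) -> (n <= r)%nat -> fsum n g = 0.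
Proof. induction n; simpl; intros H Hr; auto. rewrite IHn; [| exact H | lia]. rewrite H by lia. lra. Qed.

Lemma fsum_point n g r : (forall j, j <> r -> g j = 0) -> (r < n)%nat -> fsum n g = g r.
Proof. induction n; simpl; intros H Hr; [lia|].
  destruct (Nat.eq_dec r n).
  - subst. rewrite (fsum_point0 n g n) by (auto; lia). lra.
  - rewrite IHn; [| exact H | lia]. rewrite (H n) by lia. lra. Qed.

Fixpoint nsum (n : nat) (f : nat -> nat) : nat :=
  match n with O => O | S n' => (nsum n' f + f n')%nat end.

Lemma nsum_le n f g : (forall i, (i < n)%nat -> (f i <= g i)%nat) -> (nsum n f <= nsum n g)%nat.
Proof. induction n; simpl; intros H; [lia|]. specialize (H n) as H1. assert (nsum n f <= nsum n g)%nat by (apply IHn; intros; apply H; lia). specialize (H1 ltac:(lia)). lia. Qed.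

Lemma nsum_lt n f g i : (forall i, (i < n)%nat -> (f i <= g i)%nat) -> (i < n)%nat -> (f i < g i)%nat -> (nsum n f < nsum n g)%nat.
Proof. induction n; simpl; intros H Hi Hlt; [lia|].
  destruct (Nat.eq_dec i n).
  - subst. assert (nsum n f <= nsum n g)%nat by (apply nsum_le; intros; apply H; lia). lia.
  - assert (nsum n f < nsum n g)%nat by (apply IHn; [intros; apply H; lia| lia | exact Hlt]). specialize (H n ltac:(lia)). lia. Qed.

Lemma nsum_bound n f : (forall i, (i < n)%nat -> (f i <= 1)%nat) -> (nsum n f <= n)%nat.
Proof. induction n; simpl; intros H; [lia|]. specialize (H n) as H1. assert (nsum n f <= n)%nat by (apply IHn; intros; apply H; lia). specialize (H1 ltac:(lia)). lia. Qed.

Lemma nsum_miss n f i : (forall i, (i < n)%nat -> (f i <= 1)%nat) -> (i < n)%nat -> f i = O -> (nsum n f < n)%nat.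
Proof. intros H Hi H0. apply Nat.lt_le_trans with (nsum n (fun _ => 1%nat)).
  - apply nsum_lt with i; auto. lia.
  - apply nsum_bound. auto. Qed.

Lemma nsum_all n f : (forall i, (i < n)%nat -> f i = 1%nat) -> nsum n f = n.
Proof. induction n; simpl; intros H; auto. rewrite IHn by (intros; apply H; lia). rewrite H by lia. lia. Qed.

Lemma nsum_ge_term n f i : (i < n)%nat -> (f i <= nsum n f)%nat.
Proof. induction n; simpl; intros Hi; [lia|]. destruct (Nat.eq_dec i n). subst; lia. specialize (IHn ltac:(lia)). lia. Qed.

Lemma pow_le_dec (x : R) a b : 0 <= x <= 1 -> (b <= a)%nat -> x ^ a <= x ^ b.
Proof. intros Hx Hab. replace a with (b + (a - b))%nat by lia. rewrite pow_add.
  assert (x ^ (a - b) <= 1) by (rewrite <- (pow1 (a-b)); apply pow_incr; lra).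
  assert (0 <= x ^ b) by (apply pow_le; lra). nra. Qed.
Lemma fsum_scal_r n c f : fsum n (fun i => f i * c) = fsum n f * c.
Proof. induction n; simpl; [lra|]. rewrite IHn. lra. Qed.

Definition ev (r j : nat) : R := if Nat.eq_dec r j then 1 else 0.

Fixpoint traj (I : nat) (A : matrix_seq) (s : nat) (v : nat -> R) (n : nat) : nat -> R :=
  match n with
  | O => v
  | S n' => fun i => fsum I (fun j => A (s + n')%nat i j * traj I A s v n' j)
  end.

Lemma traj_split I A s v n1 n2 i :
  traj I A s v (n1 + n2) i = traj I A (s + n1) (traj I A s v n1) n2 i.
Proof.
  revert i; induction n2; intros i; simpl.
  - rewrite Nat.add_0_r. reflexivity.
  - rewrite Nat.add_succ_r. simpl. apply fsum_ext; intros j _.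
    rewrite IHn2, Nat.add_assoc. reflexivity.
Qed.

Lemma ev_sum I r : (r < I)%nat -> fsum I (ev r) = 1.
Proof. intros Hr. rewrite (fsum_point I (ev r) r). unfold ev; destruct (Nat.eq_dec r r); [lra|congruence].
  intros j Hj; unfold ev; destruct (Nat.eq_dec r j); [lia|lra]. auto. Qed.

Lemma ev_nonneg r j : 0 <= ev r j.
Proof. unfold ev; destruct (Nat.eq_dec r j); lra. Qed.

Lemma traj_lin I A s v n i : (i < I)%nat ->
  traj I A s v n i = fsum I (fun r => v r * traj I A s (ev r) n i).
Proof.
  revert i; induction n; intros i Hi; simpl.
  - rewrite (fsum_point I (fun r => v r * ev r i) i).
    + unfold ev; destruct (Nat.eq_dec i i); [lra|congruence].
    + intros j Hj; unfold ev; destruct (Nat.eq_dec j i); [lia|lra].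
    + auto.
  - transitivity (fsum I (fun j => fsum I (fun r => v r * (A (s + n)%nat i j * traj I A s (ev r) n j)))).
    + apply fsum_ext; intros j Hj. rewrite IHn by auto. rewrite <- fsum_scal.
      apply fsum_ext; intros; ring.
    + rewrite fsum_swap. apply fsum_ext; intros r _. apply fsum_scal.
Qed.

Lemma traj_sum I A s v n : column_stochastic I A ->
  fsum I (fun i => traj I A s v n i) = fsum I v.
Proof.
  intros hcs. induction n; simpl; [reflexivity|].
  rewrite fsum_swap. rewrite <- IHn. apply fsum_ext; intros j Hj.
  rewrite fsum_scal_r. destruct (hcs (s + n)%nat) as [_ H]. rewrite H by auto. ring.
Qed.

Lemma traj_nonneg I A s v n : column_stochastic I A ->
  (forall j, (j < I)%nat -> 0 <= v j) -> forall i, (i < I)%nat -> 0 <= traj I A s v n i.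
Proof.
  intros hcs Hv. induction n; intros i Hi; simpl; auto.
  apply fsum_nonneg; intros j Hj. destruct (hcs (s + n)%nat) as [H _].
  apply Rmult_le_pos; auto.
Qed.

Lemma traj_term I A s v n i j : column_stochastic I A ->
  (forall j, (j < I)%nat -> 0 <= v j) -> (i < I)%nat -> (j < I)%nat ->
  A (s + n)%nat i j * traj I A s v n j <= traj I A s v (S n) i.
Proof.
  intros hcs Hv Hi Hj. simpl. apply (fsum_ge_term I (fun j => A (s + n)%nat i j * traj I A s v n j) j); auto.
  intros k Hk. destruct (hcs (s + n)%nat) as [H _]. apply Rmult_le_pos; auto.
  apply traj_nonneg; auto.
Qed.

Lemma traj_le1 I A s r n i : column_stochastic I A -> (r < I)%nat -> (i < I)%nat ->
  traj I A s (ev r) n i <= 1.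
Proof.
  intros hcs Hr Hi. rewrite <- (ev_sum I r Hr). rewrite <- (traj_sum I A s (ev r) n hcs).
  apply (fsum_ge_term I (fun i => traj I A s (ev r) n i)); auto.
  intros; apply traj_nonneg; auto. intros; apply ev_nonneg.
Qed.

Lemma crt_exit (Rel : nat -> nat -> Prop) (Q : nat -> Prop) a b :
  clos_refl_trans_1n nat Rel a b -> Q a -> ~ Q b -> exists x y, Rel x y /\ Q x /\ ~ Q y.
Proof.
  induction 1; intros Ha Hb. contradiction.
  destruct (classic (Q y)). auto. exists x, y; auto.
Qed.
Lemma traj_pos I E A kappa B s r :
  (2 <= I)%nat -> B_strongly_connected I E B -> 0 < kappa ->
  compliant I E A kappa -> column_stochastic I A -> (r < I)%nat ->
  forall t, (t < I)%nat -> kappa ^ ((I - 1) * B) <= traj I A s (ev r) ((I - 1) * B) t.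
Proof.
  intros hI hB hk hcomp hcs Hr.
  set (P := fun n t => kappa ^ n <= traj I A s (ev r) n t).
  assert (Hnn : forall n t, (t < I)%nat -> 0 <= traj I A s (ev r) n t).
  { intros; apply traj_nonneg; auto. intros; apply ev_nonneg. }
  assert (edge : forall n u v, (u < I)%nat -> (v < I)%nat ->
            (u = v \/ E (s + n)%nat u v) -> P n u -> P (S n) v).
  { intros n u v Hu Hv He Hp. unfold P in *.
    assert (Ha : kappa <= A (s + n)%nat v u).
    { destruct (hcomp (s + n)%nat v u Hv Hu) as [_ [H1 H2]].
      destruct He as [He|He]; [subst; auto| auto]. }
    pose proof (traj_term I A s (ev r) n v u hcs (fun j _ => ev_nonneg r j) Hv Hu).
    pose proof (pow_le kappa n (Rlt_le _ _ hk)). change (kappa ^ S n) with (kappa * kappa ^ n). nra. }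
  assert (mono : forall d n t, (t < I)%nat -> P n t -> P (n + d)%nat t).
  { induction d; intros n t Ht Hp. rewrite Nat.add_0_r; auto.
    rewrite Nat.add_succ_r. apply edge with t; auto. }
  assert (P0 : forall n, P n r).
  { intros n. replace n with (0 + n)%nat by lia. apply mono; auto.
    unfold P; simpl; unfold ev; destruct (Nat.eq_dec r r); [lra|congruence]. }
  destruct hB as [hB0 hB].
  assert (window : forall n0, (exists w, (w < I)%nat /\ ~ P n0 w) ->
            exists v, (v < I)%nat /\ ~ P n0 v /\ P (n0 + B)%nat v).
  { intros n0 [w [Hw Hnw]].
    destruct (crt_exit _ (fun x => (x < I)%nat /\ P n0 x) r w
                (hB (s + n0)%nat r w Hr Hw)) as [x [y [[Hx [Hy [t [Ht1 [Ht2 He]]]]] [[_ Hpx] Hpy]]]].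
    - auto.
    - intros [_ H]; auto.
    - exists y. split; auto. split. intros H; apply Hpy; auto.
      set (d := (t - (s + n0))%nat).
      assert (Hpx' : P (n0 + d)%nat x) by (apply mono; auto).
      assert (Hpy' : P (S (n0 + d)) y).
      { apply edge with x; auto. right. replace (s + (n0 + d))%nat with t by (unfold d; lia). auto. }
      replace (n0 + B)%nat with (S (n0 + d) + (B - S d))%nat by (unfold d; lia).
      apply mono; auto. }
  set (cnt := fun n => nsum I (fun t => if Rle_dec (kappa ^ n) (traj I A s (ev r) n t) then 1%nat else 0%nat)).
  assert (growth : forall j, (j <= I - 1)%nat -> (j + 1 <= cnt (j * B)%nat)%nat).
  { induction j; intros Hj.
    - simpl. unfold cnt. eapply Nat.le_trans; [| apply (nsum_ge_term _ _ r Hr)].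
      cbv beta; match goal with |- context [Rle_dec ?a ?b] => destruct (Rle_dec a b) as [_|n] end; [lia|]. exfalso; apply n. apply P0.
    - specialize (IHj ltac:(lia)).
      replace (S j * B)%nat with (j * B + B)%nat by lia.
      destruct (classic (exists w, (w < I)%nat /\ ~ P (j * B)%nat w)) as [Hex|Hnex].
      + destruct (window _ Hex) as [v [Hv [Hn Hp]]].
        assert (cnt (j * B)%nat < cnt (j * B + B)%nat)%nat; [|lia].
        unfold cnt. apply nsum_lt with v; auto.
        * intros t Ht. destruct (Rle_dec (kappa ^ (j * B)) _) as [H1|H1]; [|lia].
          destruct (Rle_dec _ _) as [H2|H2]; [lia|]. exfalso; apply H2. apply (mono B (j * B)%nat t Ht H1).
        * destruct (Rle_dec (kappa ^ (j * B)) _) as [H1|H1]. exfalso; apply Hn; apply H1.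
          destruct (Rle_dec _ _) as [H2|H2]; [lia|]. exfalso; apply H2; apply Hp.
      + unfold cnt. rewrite nsum_all; [lia|]. intros t Ht.
        destruct (Rle_dec _ _) as [H2|H2]; [auto|]. exfalso; apply H2.
        apply (mono B (j * B)%nat t Ht). destruct (classic (P (j * B)%nat t)); auto.
        exfalso; apply Hnex; eauto. }
  intros t Ht. specialize (growth (I - 1)%nat (le_n _)).
  destruct (classic (P ((I - 1) * B)%nat t)) as [H|H]; auto. exfalso.
  assert (cnt ((I - 1) * B)%nat < I)%nat; [|lia].
  unfold cnt. apply nsum_miss with t; auto.
  - intros i Hi. destruct (Rle_dec _ _); lia.
  - destruct (Rle_dec _ _); [contradiction|auto].
Qed.
Lemma q_nonneg I E A kappa B :
  (2 <= I)%nat -> B_strongly_connected I E B -> 0 < kappa ->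
  compliant I E A kappa -> column_stochastic I A ->
  0 <= 1 - INR I * kappa ^ ((I - 1) * B).
Proof.
  intros hI hB hk hcomp hcs.
  assert (H0 : (0 < I)%nat) by lia.
  pose proof (traj_sum I A 0 (ev 0) ((I - 1) * B) hcs) as Hs. rewrite ev_sum in Hs by auto.
  assert (fsum I (fun _ => kappa ^ ((I - 1) * B)) <= 1).
  { rewrite <- Hs. apply fsum_le. intros t Ht. eapply traj_pos; eauto. }
  rewrite fsum_const in H. lra.
Qed.

Lemma spread I E A kappa B i :
  (2 <= I)%nat -> B_strongly_connected I E B -> 0 < kappa ->
  compliant I E A kappa -> column_stochastic I A -> (i < I)%nat ->
  forall n s, exists lo hi,
    hi - lo <= (1 - INR I * kappa ^ ((I - 1) * B)) ^ (n / ((I - 1) * B)) /\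
    forall r, (r < I)%nat -> lo <= traj I A s (ev r) n i <= hi.
Proof.
  intros hI hB hk hcomp hcs Hi.
  pose proof (q_nonneg I E A kappa B hI hB hk hcomp hcs) as Hq.
  assert (HL : (1 <= (I - 1) * B)%nat).
  { destruct hB as [hB0 _]. apply Nat.le_trans with (1 * 1)%nat; [lia|]. apply Nat.mul_le_mono; lia. }
  set (L := ((I - 1) * B)%nat) in *.
  set (eps := kappa ^ L) in *.
  set (q := 1 - INR I * eps) in *.
  assert (main : forall N n s, (n <= N)%nat -> exists lo hi, hi - lo <= q ^ (n / L) /\
            forall r, (r < I)%nat -> lo <= traj I A s (ev r) n i <= hi).
  2:{ intros n s; apply (main n n s); lia. }
  induction N; intros n s Hn.
  - exists 0, 1. rewrite Nat.div_small by lia. simpl. split; [lra|].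
    intros r Hr. split. apply traj_nonneg; auto. intros; apply ev_nonneg. apply traj_le1; auto.
  - destruct (Nat.lt_ge_cases n L) as [Hlt|Hge].
    + exists 0, 1. rewrite Nat.div_small by lia. simpl. split; [lra|].
      intros r Hr. split. apply traj_nonneg; auto. intros; apply ev_nonneg. apply traj_le1; auto.
    + destruct (IHN (n - L)%nat (s + L)%nat ltac:(lia)) as [lo [hi [Hsp Hb]]].
      set (g := fun t => traj I A (s + L) (ev t) (n - L) i).
      set (Sg := fsum I g).
      exists (eps * Sg + q * lo), (eps * Sg + q * hi).
      split.
      * replace (n / L)%nat with ((n - L) / L + 1)%nat.
        2:{ replace n with ((n - L) + 1 * L)%nat at 2 by lia. rewrite Nat.div_add; lia. }
        rewrite pow_add. simpl. nra.
      * intros r Hr.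
        replace n with (L + (n - L))%nat by lia. rewrite traj_split, traj_lin by auto.
        fold g.
        set (M := fun t => traj I A s (ev r) L t).
        assert (HM : forall t, (t < I)%nat -> eps <= M t) by (intros; unfold M, eps, L; eapply traj_pos; eauto).
        assert (HMs : fsum I M = 1) by (unfold M; rewrite traj_sum by auto; apply ev_sum; auto).
        assert (Hsplit : fsum I (fun t => M t * g t) = eps * Sg + fsum I (fun t => (M t - eps) * g t)).
        { unfold Sg. rewrite <- fsum_scal, <- fsum_plus. apply fsum_ext; intros; ring. }
        assert (Hq' : fsum I (fun t => M t - eps) = q).
        { rewrite fsum_minus, HMs, fsum_const. unfold q. ring. }
        change (fsum I (fun t => traj I A s (ev r) L t * g t)) with (fsum I (fun t => M t * g t)).
        change (fsum I (fun r0 => M r0 * traj I A (s + L) (ev r0) (n - L) i)) with (fsum I (fun t => M t * g t)). rewrite Hsplit. split.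
        -- assert (fsum I (fun t => (M t - eps) * lo) <= fsum I (fun t => (M t - eps) * g t)).
           { apply fsum_le; intros t Ht. specialize (HM t Ht). specialize (Hb t Ht). unfold g. nra. }
           rewrite fsum_scal_r, Hq' in H. lra.
        -- assert (fsum I (fun t => (M t - eps) * g t) <= fsum I (fun t => (M t - eps) * hi)).
           { apply fsum_le; intros t Ht. specialize (HM t Ht). specialize (Hb t Ht). unfold g. nra. }
           rewrite fsum_scal_r, Hq' in H. lra.
Qed.
Lemma fsum_S n f : fsum (S n) f = fsum n f + f n.
Proof. reflexivity. Qed.

Lemma cs_aux n f a : 2 * fsum n f * a <= fsum n (fun i => f i ^ 2) + INR n * a ^ 2.
Proof. induction n; [simpl; nra|]. rewrite !fsum_S, S_INR.
  assert (2 * f n * a <= f n ^ 2 + a ^ 2) by (pose proof (pow2_ge_0 (f n - a)); nra). nra. Qed.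

Lemma cs n f : (fsum n f) ^ 2 <= INR n * fsum n (fun i => f i ^ 2).
Proof. induction n; [simpl; nra|]. rewrite !fsum_S, S_INR.
  pose proof (cs_aux n f (f n)). nra. Qed.

Lemma ps_phi_traj I A k i : ps_phi I A k i = traj I A 0 (fun _ => 1) k i.
Proof. revert i; induction k; intros i; simpl; auto. apply fsum_ext; intros; rewrite IHk; reflexivity. Qed.

Lemma kappa_le1 I E A kappa : (1 <= I)%nat -> compliant I E A kappa -> column_stochastic I A -> kappa <= 1.
Proof.
  intros hI hcomp hcs. destruct (hcomp O O O ltac:(lia) ltac:(lia)) as [_ [_ H]].
  destruct (hcs O) as [Hn Hs]. specialize (Hs O ltac:(lia)).
  pose proof (fsum_ge_term I (fun i => A O i O) O (fun j Hj => Hn j O Hj ltac:(lia)) ltac:(lia)).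
  simpl in H0. lra.
Qed.

Lemma phi_lower_k I E A kappa k i : 0 < kappa -> compliant I E A kappa -> column_stochastic I A ->
  (i < I)%nat -> kappa ^ k <= traj I A 0 (fun _ => 1) k i.
Proof.
  intros hk hcomp hcs Hi. induction k; simpl; [lra|].
  pose proof (traj_term I A 0 (fun _ => 1) k i i hcs (fun _ _ => Rle_0_1) Hi Hi). simpl in H.
  destruct (hcomp k i i Hi Hi) as [_ [_ Ha]].
  pose proof (pow_le kappa k (Rlt_le _ _ hk)). nra.
Qed.

Lemma phi_lower I E A kappa B k i :
  (2 <= I)%nat -> B_strongly_connected I E B -> 0 < kappa ->
  compliant I E A kappa -> column_stochastic I A -> (i < I)%nat ->
  kappa ^ ((I - 1) * B) <= traj I A 0 (fun _ => 1) k i.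
Proof.
  intros hI hB hk hcomp hcs Hi.
  pose proof (kappa_le1 I E A kappa ltac:(lia) hcomp hcs) as Hk1.
  set (L := ((I - 1) * B)%nat).
  destruct (Nat.le_gt_cases k L) as [Hle|Hgt].
  - eapply Rle_trans; [apply pow_le_dec; [lra|exact Hle]|]. eapply phi_lower_k; eauto.
  - replace k with ((k - L) + L)%nat by lia. rewrite traj_split, traj_lin by auto.
    set (w := traj I A 0 (fun _ => 1) (k - L)).
    assert (Hw : forall r, (r < I)%nat -> 0 <= w r) by (intros; apply traj_nonneg; auto; intros; lra).
    assert (Hws : fsum I w = INR I) by (rewrite <- (Rmult_1_r (INR I)), <- fsum_const; apply (traj_sum I A 0 (fun _ => 1) (k - L) hcs)).
    assert (fsum I (fun r => w r * kappa ^ L) <= fsum I (fun r => w r * traj I A (0 + (k - L)) (ev r) L i)).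
    { apply fsum_le; intros r Hr. apply Rmult_le_compat_l; auto. unfold L; eapply traj_pos; eauto. }
    rewrite fsum_scal_r, Hws in H.
    assert (1 <= INR I) by (apply (le_INR 1); lia).
    pose proof (pow_le kappa L (Rlt_le _ _ hk)). nra.
Qed.

Lemma y_traj I E A kappa x0 l k i : 0 < kappa -> compliant I E A kappa -> column_stochastic I A ->
  (i < I)%nat -> ps_phi I A k i * ps_x I A x0 k i l = traj I A 0 (fun j => x0 j l) k i.
Proof.
  intros hk hcomp hcs. revert i; induction k; intros i Hi.
  - simpl. ring.
  - cbn [ps_x].
    assert (Hp : 0 < ps_phi I A (S k) i).
    { rewrite ps_phi_traj. eapply Rlt_le_trans; [apply (pow_lt kappa (S k) hk)|]. eapply phi_lower_k; eauto. }
    rewrite <- Rmult_assoc, Rinv_r, Rmult_1_l by lra.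
    simpl. apply fsum_ext; intros j Hj. rewrite <- IHk by auto. ring.
Qed.
Lemma const_bound I B kappa k q :
  (2 <= I)%nat -> (1 <= B)%nat -> 0 < kappa -> kappa <= 1 ->
  0 <= q -> q <= 1 - INR I * kappa ^ ((I - 1) * B) ->
  q ^ (k / ((I - 1) * B)) * (/ kappa ^ ((I - 1) * B) * sqrt (INR I))
  <= c_d I B kappa * rho_d I B kappa ^ k.
Proof.
  intros hI hB hk hk1 hq0 hq.
  assert (HL : (1 <= (I - 1) * B)%nat).
  { apply Nat.le_trans with (1 * 1)%nat; [lia|]. apply Nat.mul_le_mono; lia. }
  assert (HI2 : 2 <= INR I) by (apply (le_INR 2); lia).
  unfold c_d, rho_d. cbv zeta.
  set (L := ((I - 1) * B)%nat) in *.
  assert (Hkt : 0 < kappa_tilde_d I B kappa <= kappa / 2).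
  { unfold kappa_tilde_d. split.
    - apply Rdiv_lt_0_compat; [apply pow_lt; auto| lra].
    - assert (kappa ^ (2 * (I - 1) * B + 1) <= kappa ^ 1) by (apply pow_le_dec; [lra|lia]).
      rewrite pow_1 in H. unfold Rdiv. apply Rle_trans with (kappa * / INR I).
      apply Rmult_le_compat_r; [left; apply Rinv_0_lt_compat; lra| auto].
      apply Rmult_le_compat_l; [lra|]. apply Rinv_le_contravar; lra. }
  set (kt := kappa_tilde_d I B kappa) in *.
  set (t := kt ^ L).
  assert (Ht0 : 0 < t) by (apply pow_lt; lra).
  assert (HtK : t <= kappa ^ L) by (apply pow_incr; lra).
  assert (Ht1 : t < 1).
  { assert (t <= kt ^ 1) by (apply pow_le_dec; [lra|lia]). rewrite pow_1 in H. lra. }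
  set (rho := Rpower (1 - t) (/ INR L)).
  assert (Hr0 : 0 < rho) by (unfold rho, Rpower; apply exp_pos).
  assert (HrL : rho ^ L = 1 - t).
  { rewrite <- Rpower_pow by auto. unfold rho. rewrite Rpower_mult, Rinv_l, Rpower_1; auto. lra.
    apply not_0_INR; lia. }
  assert (Hr1 : rho <= 1).
  { destruct (Rle_lt_dec rho 1); auto. pose proof (Rlt_pow_R1 rho L r ltac:(lia)). lra. }
  assert (HkL : 0 < kappa ^ L) by (apply pow_lt; auto).
  assert (Hq' : q <= rho ^ L) by nra.
  assert (Hpow : q ^ (k / L) <= rho ^ k * / (1 - t)).
  { assert (q ^ (k / L) <= rho ^ (L * (k / L))) by (rewrite pow_mult; apply pow_incr; lra).
    assert (rho ^ (L * (k / L) + L) <= rho ^ k).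
    { apply pow_le_dec; [lra|]. pose proof (Nat.div_mod k L ltac:(lia)).
      pose proof (Nat.mod_upper_bound k L ltac:(lia)). lia. }
    rewrite pow_add, HrL in H0.
    apply Rle_trans with (rho ^ (L * (k / L))); auto.
    apply Rmult_le_reg_r with (1 - t); [lra|]. rewrite Rmult_assoc, Rinv_l, Rmult_1_r by lra. lra. }
  assert (Hs : sqrt (INR I) <= INR I).
  { pose proof (sqrt_sqrt (INR I) ltac:(lra)).
    assert (1 <= sqrt (INR I)) by (rewrite <- sqrt_1; apply sqrt_le_1_alt; lra). nra. }
  assert (Hinv : / kappa ^ L <= / t) by (apply Rinv_le_contravar; auto).
  assert (Hrinv : 1 <= / rho) by (rewrite <- Rinv_1; apply Rinv_le_contravar; lra).
  assert (HX : / kappa ^ L * sqrt (INR I) <= 2 * INR I / rho * (2 * (1 + / t))).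
  { assert (0 <= / kappa ^ L) by (left; apply Rinv_0_lt_compat; auto).
    assert (0 <= sqrt (INR I)) by apply sqrt_pos.
    assert (0 < / t) by (apply Rinv_0_lt_compat; auto).
    apply Rle_trans with (/ t * INR I).
    apply Rmult_le_compat; auto.
    set (a := / rho) in *. set (b := / t) in *. unfold Rdiv. fold a.
    assert (0 <= INR I * b * (a - 1)) by (apply Rmult_le_pos; [apply Rmult_le_pos|]; lra).
    assert (0 <= INR I * a) by (apply Rmult_le_pos; lra).
    nra. }
  assert (0 <= / kappa ^ L * sqrt (INR I)).
  { apply Rmult_le_pos; [left; apply Rinv_0_lt_compat; auto| apply sqrt_pos]. }
  assert (0 <= rho ^ k) by (apply pow_le; lra).
  assert (0 < / (1 - t)) by (apply Rinv_0_lt_compat; lra).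
  apply Rle_trans with (rho ^ k * / (1 - t) * (/ kappa ^ L * sqrt (INR I))).
  apply Rmult_le_compat_r; auto.
  replace (2 * INR I / rho * (2 * (1 + / t) / (1 - t)) * rho ^ k)
    with (rho ^ k * / (1 - t) * (2 * INR I / rho * (2 * (1 + / t)))) by (unfold Rdiv; ring).
  apply Rmult_le_compat_l; [apply Rmult_le_pos; lra| exact HX].
Qed.
Theorem mainTheorem12
  (I m B : nat) (E : digraph_seq) (A : matrix_seq) (kappa : R)
  (x0 : nat -> nat -> R)
  (hI : (2 <= I)%nat)
  (hB : B_strongly_connected I E B)
  (hkappa : 0 < kappa)
  (hcomp : compliant I E A kappa)
  (hcs : column_stochastic I A) :
  forall k : nat,
    (forall l : nat,
       fsum I (fun i => ps_phi I A (S k) i * ps_x I A x0 (S k) i l)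
       = fsum I (fun i => ps_phi I A k i * ps_x I A x0 k i l) /\
       fsum I (fun i => ps_phi I A k i * ps_x I A x0 k i l)
       = fsum I (fun i => ps_phi I A 0 i * ps_x I A x0 0 i l)) /\
    (forall i : nat, (i < I)%nat ->
       vnorm m (fun l => ps_x I A x0 k i l
                 - / INR I * fsum I (fun j => ps_phi I A k j * ps_x I A x0 k j l))
       <= c_d I B kappa * rho_d I B kappa ^ k * stacked_norm I m x0).
Proof.
  intros k.
  assert (Hsum : forall k' l, fsum I (fun i => ps_phi I A k' i * ps_x I A x0 k' i l) = fsum I (fun j => x0 j l)).
  { intros k' l. rewrite (fsum_ext I _ (fun i => traj I A 0 (fun j => x0 j l) k' i)).
    apply traj_sum; auto. intros i Hi. eapply y_traj; eauto. }
  split.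
  { intros l. rewrite !Hsum. auto. }
  intros i Hi.
  pose proof (kappa_le1 I E A kappa ltac:(lia) hcomp hcs) as Hk1.
  pose proof (q_nonneg I E A kappa B hI hB hkappa hcomp hcs) as Hq.
  destruct (spread I E A kappa B i hI hB hkappa hcomp hcs Hi k 0) as [lo [hi [Hsp Hb]]].
  set (L := ((I - 1) * B)%nat) in *.
  set (q := 1 - INR I * kappa ^ L) in *.
  set (D := q ^ (k / L) * / kappa ^ L).
  assert (HkL : 0 < kappa ^ L) by (apply pow_lt; auto).
  assert (HI2 : 2 <= INR I) by (apply (le_INR 2); lia).
  assert (HD : 0 <= D) by (unfold D; apply Rmult_le_pos; [apply pow_le; auto| left; apply Rinv_0_lt_compat; auto]).
  assert (Hphi : kappa ^ L <= ps_phi I A k i) by (rewrite ps_phi_traj; unfold L; eapply phi_lower; eauto).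
  set (P := fun r => traj I A 0 (ev r) k i).
  assert (HphiP : ps_phi I A k i = fsum I P).
  { rewrite ps_phi_traj, traj_lin by auto. apply fsum_ext; intros; unfold P; ring. }
  assert (Hloc : lo <= ps_phi I A k i / INR I <= hi).
  { assert (fsum I (fun _ => lo) <= fsum I P) by (apply fsum_le; intros; apply Hb; auto).
    assert (fsum I P <= fsum I (fun _ => hi)) by (apply fsum_le; intros; apply Hb; auto).
    rewrite fsum_const in *. rewrite HphiP. split.
    - apply Rmult_le_reg_r with (INR I); [lra|]. unfold Rdiv. rewrite Rmult_assoc, Rinv_l by lra. lra.
    - apply Rmult_le_reg_r with (INR I); [lra|]. unfold Rdiv. rewrite Rmult_assoc, Rinv_l by lra. lra. }
  assert (Hdl : forall l, Rabs (ps_x I A x0 k i l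
                 - / INR I * fsum I (fun j => ps_phi I A k j * ps_x I A x0 k j l))
                 <= D * fsum I (fun r => Rabs (x0 r l))).
  { intros l. rewrite Hsum.
    set (phi := ps_phi I A k i) in *.
    pose proof (y_traj I E A kappa x0 l k i hkappa hcomp hcs Hi) as Hy. fold phi in Hy.
    rewrite traj_lin in Hy by auto. change (fsum I (fun r => x0 r l * traj I A 0 (ev r) k i)) with (fsum I (fun r => x0 r l * P r)) in Hy.
    assert (Hx : ps_x I A x0 k i l = fsum I (fun r => x0 r l * P r) / phi).
    { rewrite <- Hy. field. lra. }
    rewrite Hx.
    assert (Heq : fsum I (fun r => x0 r l * P r) / phi - / INR I * fsum I (fun j => x0 j l)
                  = fsum I (fun r => x0 r l * (P r - phi / INR I)) / phi).
    { assert (fsum I (fun r => x0 r l * (P r - phi / INR I)) =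
              fsum I (fun r => x0 r l * P r) - fsum I (fun r => x0 r l) * (phi / INR I)).
      { rewrite <- fsum_scal_r, <- fsum_minus. apply fsum_ext; intros; ring. }
      rewrite H. field. lra. }
    rewrite Heq. unfold Rdiv. rewrite Rabs_mult, (Rabs_right (/ phi)) by (left; apply Rinv_0_lt_compat; lra).
    assert (H1 : Rabs (fsum I (fun r => x0 r l * (P r - phi / INR I))) <= (hi - lo) * fsum I (fun r => Rabs (x0 r l))).
    { eapply Rle_trans; [apply fsum_abs|]. rewrite <- fsum_scal. apply fsum_le; intros r Hr.
      rewrite Rabs_mult. rewrite Rmult_comm. apply Rmult_le_compat_r; [apply Rabs_pos|].
      apply Rabs_le. specialize (Hb r Hr). unfold P. lra. }
    assert (H2 : / phi <= / kappa ^ L) by (apply Rinv_le_contravar; auto).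
    assert (H3 : 0 <= fsum I (fun r => Rabs (x0 r l))) by (apply fsum_nonneg; intros; apply Rabs_pos).
    assert (H4 : 0 <= hi - lo) by (specialize (Hb 0%nat ltac:(lia)); lra).
    unfold D.
    apply Rle_trans with ((hi - lo) * fsum I (fun r => Rabs (x0 r l)) * / kappa ^ L).
    { apply Rmult_le_compat; auto. apply Rabs_pos. left; apply Rinv_0_lt_compat; lra. }
    replace (q ^ (k / L) * / kappa ^ L * fsum I (fun r => Rabs (x0 r l)))
      with (q ^ (k / L) * fsum I (fun r => Rabs (x0 r l)) * / kappa ^ L) by ring.
    apply Rmult_le_compat_r; [left; apply Rinv_0_lt_compat; auto|].
    apply Rmult_le_compat_r; auto. }
  set (st := fsum I (fun r => fsum m (fun l => x0 r l ^ 2))).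
  assert (Hst : 0 <= st) by (apply fsum_nonneg; intros; apply fsum_nonneg; intros; apply pow2_ge_0).
  assert (Hc : D * sqrt (INR I) <= c_d I B kappa * rho_d I B kappa ^ k).
  { unfold D. rewrite Rmult_assoc. apply const_bound; auto.
    destruct hB; lia. unfold q, L; lra. }
  apply Rle_trans with (D * sqrt (INR I) * sqrt st).
  2:{ apply Rmult_le_compat_r; auto. apply sqrt_pos. }
  unfold vnorm.
  rewrite <- (sqrt_Rsqr (D * sqrt (INR I) * sqrt st)).
  2:{ apply Rmult_le_pos; [apply Rmult_le_pos; auto; apply sqrt_pos| apply sqrt_pos]. }
  apply sqrt_le_1_alt.
  replace (Rsqr (D * sqrt (INR I) * sqrt st)) with (D ^ 2 * INR I * st).
  2:{ unfold Rsqr. replace (D * sqrt (INR I) * sqrt st * (D * sqrt (INR I) * sqrt st))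
        with (D * D * (sqrt (INR I) * sqrt (INR I)) * (sqrt st * sqrt st)) by ring.
      rewrite !sqrt_sqrt by lra. ring. }
  unfold st. rewrite fsum_swap, <- fsum_scal.
  apply fsum_le; intros l Hl.
  specialize (Hdl l).
  set (d := ps_x I A x0 k i l - / INR I * fsum I (fun j => ps_phi I A k j * ps_x I A x0 k j l)) in *.
  set (Sa := fsum I (fun r => Rabs (x0 r l))) in *.
  assert (Hcs : Sa ^ 2 <= INR I * fsum I (fun r => x0 r l ^ 2)).
  { unfold Sa. eapply Rle_trans; [apply cs|]. right. f_equal. apply fsum_ext; intros.
    apply pow2_abs. }
  assert (HSa : 0 <= Sa) by (apply fsum_nonneg; intros; apply Rabs_pos).
  assert (d ^ 2 <= (D * Sa) ^ 2).
  { rewrite <- (pow2_abs d). apply pow_incr. split; [apply Rabs_pos| auto]. }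
  assert (0 <= D ^ 2) by apply pow2_ge_0.
  replace (D ^ 2 * INR I * fsum I (fun r => x0 r l ^ 2)) with (D ^ 2 * (INR I * fsum I (fun r => x0 r l ^ 2))) by ring.
  rewrite Rpow_mult_distr in H. nra.
Qed.
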